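(* For every constant $c>0$ there is a function $\varepsilon(n)\to 0$ as $n\to\infty$ such that \[ \Pr\left[\Gamma(G(n,c/n)) \leq \left(\tfrac12+\varepsilon(n)\right)\frac{\ln n}{\ln\ln n}\right]\to 1 \quad\text{as } n\to\infty . \]
   Context: $G(n,p)$ denotes the Erdős–Rényi random graph on vertex set $\{1,\dots,n\}$ in which each pair of vertices is joined independently with probability $p$. The Grundy number $\Gamma(G)$ is the largest number of colors used by the first-fit coloring algorithm (which colors vertices in a given order, each with the smallest positive integer not used on its previously colored neighbors) over all vertex orderings. *)

(* Defs.v *)
From HB Require Import structures.
From mathcomp Require Import all_boot all_order all_algebra all_fingroup.
From mathcomp Require Import all_classical all_reals all_analysis.
Set Implicit Arguments. Unset Strict Implicit. Unset Printing Implicit Defensive.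
Import Order.TTheory GRing.Theory Num.Theory.

Definition mex1 (L : seq nat) : nat :=
  head 0%N [seq k <- iota 1 (size L).+1 | k \notin L].

(* first-fit colouring: vertices of s are coloured in the order of s;
   [done] are the already-coloured vertices, [col] their colours
   (uncoloured vertices have colour 0). *)
Fixpoint ff_aux (T : eqType) (adj : rel T) (done : seq T) (col : T -> nat)
    (s : seq T) : T -> nat :=
  match s with
  | [::] => col
  | x :: s' =>
      let c := mex1 [seq col y | y <- done & adj x y] in
      ff_aux adj (x :: done) (fun z => if z == x then c else col z) s'
  end.

Definition first_fit (T : eqType) (adj : rel T) (s : seq T) : T -> nat :=
  ff_aux adj [::] (fun _ => 0%N) s.

(* simple graph on 'I_n given by an edge set of 2-element subsets *)
Definition pairs (n : nat) : {set {set 'I_n}} := [set e : {set 'I_n} | #|e| == 2%N].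

Definition adj_of (n : nat) (E : {set {set 'I_n}}) : rel 'I_n :=
  fun x y => (x != y) && ([set x; y] \in E).

Definition ff_colors (n : nat) (E : {set {set 'I_n}}) (sigma : {perm 'I_n}) : nat :=
  let col := first_fit (adj_of E) [seq sigma i | i <- enum 'I_n] in
  (\max_(x : 'I_n) col x)%N.

Definition grundy (n : nat) (E : {set {set 'I_n}}) : nat :=
  (\max_(sigma : {perm 'I_n}) ff_colors E sigma)%N.

Definition gnp_prob (R : realType) (n : nat) (p : R)
    (P : {set {set 'I_n}} -> bool) : R :=
  (\sum_(E in powerset (pairs n) | P E)
      p ^+ #|E| * (1 - p) ^+ (#|pairs n| - #|E|))%R.

(* Main.v *)
Require Import Defs.
From HB Require Import structures.
From mathcomp Require Import all_boot all_order all_algebra all_fingroup.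
From mathcomp Require Import all_classical all_reals all_analysis.
From mathcomp Require Import ring lra.
Import Order.TTheory GRing.Theory Num.Theory numFieldNormedType.Exports.

Set Implicit Arguments. Unset Strict Implicit. Unset Printing Implicit Defensive.

Lemma mex_head (L : seq nat) a len j :
  a <= j < head 0%N [seq k <- iota a len | k \notin L] -> j \in L.
Proof.
elim: len a => [|len IH] a /=; first by rewrite andbF.
case: ifP => [aL|/negbFE aL] /=.
  by move=> /andP[h1 h2]; move: (leq_ltn_trans h1 h2); rewrite ltnn.
case/andP; rewrite leq_eqVlt => /orP[/eqP<- //|h1 h2].
by apply: (IH a.+1); rewrite h1.
Qed.

Lemma mex1P (L : seq nat) j : 0 < j < mex1 L -> j \in L.
Proof. exact: mex_head. Qed.

Section FF.
Variable T : eqType.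
Variable adj : rel T.

Definition Inv (D : seq T) (col : T -> nat) :=
  forall x j, 0 < j < col x -> exists y, [/\ y \in D, adj x y & col y = j].

Lemma ff_aux_inv s D col : uniq s -> (forall x, x \in s -> x \notin D) ->
  Inv D col ->
  forall x j, 0 < j < ff_aux adj D col s x -> exists y, adj x y /\ ff_aux adj D col s y = j.
Proof.
elim: s D col => [|x s IH] D col /=.
  by move=> _ _ hI z j /hI [y [_ h1 h2]]; exists y.
case/andP=> xs us hD hI; apply: IH => //.
  move=> z zs; rewrite in_cons negb_or (hD z) ?andbT ?in_cons ?zs ?orbT //.
  by apply/eqP=> zx; move: xs; rewrite -zx zs.
move=> z j; case: ifP => [/eqP -> hj|zx hj].
  have := mex1P hj; case/mapP => y; rewrite mem_filter => /andP[axy yD] ->.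
  exists y; split => //; first by rewrite in_cons yD orbT.
  case: ifP => // /eqP yx; move: (hD x); rewrite in_cons eqxx => /(_ isT).
  by rewrite -yx yD.
have [y [yD azy cy]] := hI z j hj.
exists y; split => //; first by rewrite in_cons yD orbT.
case: ifP => // /eqP yx; move: (hD x); rewrite in_cons eqxx => /(_ isT).
by rewrite -yx yD.
Qed.

Lemma first_fitP s : uniq s ->
  forall x j, 0 < j < first_fit adj s x -> exists y, adj x y /\ first_fit adj s y = j.
Proof.
move=> us; apply: ff_aux_inv => //.
by move=> x j /andP[h1]; rewrite ltnNge (ltnW h1).
Qed.
End FF.

Lemma bigmax_ex (I : finType) (f : I -> nat) k : 0 < k -> k <= \max_(i : I) f i ->
  exists i, k <= f i.
Proof.
move=> k0 h; apply/existsP; apply: contraLR h => /existsPn hn.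
rewrite -ltnNge -(ltn_predK k0) ltnS; apply/bigmax_leqP => i _.
by move: (hn i); rewrite -ltnNge -(ltn_predK k0) ltnS.
Qed.

Section Str.
Variable n : nat.
Implicit Types (v u : 'I_n) (A B : {set 'I_n}).

Definition edgesF v u A B : {set {set 'I_n}} :=
  [set [set v; u]] :|: ([set [set v; x] | x in A] :|: [set [set u; y] | y in B]).

Definition goodT m v u A B :=
  [&& v != u, #|A| == m, #|B| == m, v \notin A, u \notin A, v \notin B & u \notin B].

Lemma pick_set (adj : rel 'I_n) (col : 'I_n -> nat) z m :
  (forall j, 0 < j <= m -> exists y, adj z y /\ col y = j) ->
  exists A : {set 'I_n}, [/\ #|A| = m, forall y, y \in A -> adj z y &
                            forall y, y \in A -> 0 < col y <= m].
Proof.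
move=> hw.
pose f (j : 'I_m) := odflt z [pick y | adj z y && (col y == j.+1)].
have hf j : adj z (f j) && (col (f j) == j.+1).
  rewrite /f; case: pickP => [y -> //|none] /=.
  have [y [h1 h2]] := hw j.+1 (ltn_ord j).
  by move: (none y); rewrite h1 h2 eqxx.
exists [set f j | j : 'I_m]; split.
- rewrite card_imset ?card_ord //.
  move=> i j eij; apply: val_inj; move: (hf i) (hf j); rewrite eij.
  by case/andP=> _ /eqP -> /andP[_ /eqP []].
- by move=> y /imsetP[j _ ->]; case/andP: (hf j).
- move=> y /imsetP[j _ ->]; case/andP: (hf j) => _ /eqP ->.
  exact: ltn_ord.
Qed.

Lemma grundy_struct E m : m.+2 <= grundy E ->
  exists v u A B, goodT m v u A B /\ edgesF v u A B \subset E.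
Proof.
move=> /(bigmax_ex (ltn0Sn _)) [sigma].
move=> /(bigmax_ex (ltn0Sn _)) [v].
set col := first_fit _ _ => hv.
have us : uniq [seq sigma i | i <- enum 'I_n].
  by rewrite map_inj_uniq ?enum_uniq //; apply: perm_inj.
have W := @first_fitP _ (adj_of E) _ us; rewrite -/col in W.
have [u [avu cu]] : exists u, adj_of E v u /\ col u = (col v).-1.
  by apply: W; rewrite -(ltn_predK hv) ltnSn andbT; move: hv; case: (col v) => [|[|]].
have [A [cA hA1 hA2]] := @pick_set (adj_of E) col v m (fun j hj => W v j
   ltac:(move/andP: hj => [j0 jm]; rewrite j0 /=; apply: leq_ltn_trans jm _; exact: ltnW)).
have hu : m.+1 <= col u by rewrite cu -ltnS (ltn_predK hv).
have [B [cB hB1 hB2]] := @pick_set (adj_of E) col u m (fun j hj => W u j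
   ltac:(move/andP: hj => [j0 jm]; rewrite j0 /=; apply: leq_ltn_trans jm _; exact: hu)).
have nv x : adj_of E v x -> v != x by case/andP.
have nu x : adj_of E u x -> u != x by case/andP.
exists v, u, A, B; split.
- apply/and5P; split; first exact: nv.
  + by rewrite cA.
  + by rewrite cB.
  + by apply/negP => /hA1; rewrite /adj_of eqxx.
  apply/and3P; split.
  + by apply/negP => /hA2 /andP[_]; rewrite leqNgt hu.
  + by apply/negP => /hB2 /andP[_]; rewrite leqNgt (leq_trans _ hv).
  + by apply/negP => /hB1; rewrite /adj_of eqxx.
- apply/fintype.subsetP => e; rewrite !inE => /orP[/eqP ->|/orP[]].
  + by case/andP: avu.
  + by case/imsetP => x /hA1 /andP[_ ?] ->.
  + by case/imsetP => x /hB1 /andP[_ ?] ->.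
Qed.
End Str.

Local Open Scope ring_scope.

Section Prob.
Variable R : realType.
Variable n : nat.
Variable p : R.
Notation S := {set {set 'I_n}}.

Definition hF (F : S) (e : {set 'I_n}) (b : bool) : R :=
  if e \in F then (if b then p else 0)
  else if e \in pairs n then (if b then p else 1 - p) else (if b then 0 else 1).

Definition wE (F E : S) : R := \prod_e hF F e (e \in E).

Lemma wE_val (F E : S) : F \subset pairs n -> wE F E =
  if (E \subset pairs n) && (F \subset E)
  then p ^+ #|E| * (1 - p) ^+ (#|pairs n| - #|E|) else 0.
Proof.
move=> FP; rewrite /wE; case: ifP => [/andP[EP FE]|].
  rewrite (bigID (mem E)) /=.
  rewrite (eq_bigr (fun=> p)); last first.
    by move=> e eE; rewrite /hF eE; case: ifP => // _; rewrite (fintype.subsetP EP).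
  rewrite prodr_const -/(#|E|); congr (_ * _).
  rewrite (eq_bigr (fun e => if e \in pairs n then 1 - p else 1)); last first.
    move=> e /negbTE eE; rewrite /hF eE.
    by case: ifP => [eF|//]; move: eE; rewrite (fintype.subsetP FE).
  rewrite -big_mkcondr /= prodr_const; congr (_ ^+ _).
  transitivity #|pairs n :\: E|; first by apply: eq_card => e; rewrite finset.in_setD.
  by rewrite cardsD (finset.setIidPr EP).
move/negbT; rewrite negb_and => /orP[/subsetPn [e eE eP]|/subsetPn [e eF eE]].
  rewrite (bigD1 e) //= /hF eE; case: ifP => [eF|_]; last by rewrite (negbTE eP) mul0r.
  by move: eP; rewrite (fintype.subsetP FP).
by rewrite (bigD1 e) //= /hF (negbTE eE) eF mul0r.
Qed.

Lemma sum_wE (F : S) : F \subset pairs n -> \sum_E wE F E = p ^+ #|F|.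
Proof.
move=> FP.
have -> : \sum_E wE F E = \sum_(E : S) \prod_e (if e \in E then hF F e true else hF F e false).
  by apply: eq_bigr => E _; apply: eq_bigr => e _; case: (e \in E).
rewrite -bigA_distr.
rewrite (eq_bigr (fun e => if e \in F then p else 1)); last first.
  move=> e _; rewrite /hF; case: ifP => _; first exact: addr0.
  case: ifP => _; last exact: add0r.
  exact: subrKC.
by rewrite -big_mkcond prodr_const.
Qed.

Lemma gnp_probE (P : S -> bool) : gnp_prob p P = \sum_E (if P E then wE finset.set0 E else 0).
Proof.
rewrite /gnp_prob big_mkcond /=; apply: eq_bigr => E _.
rewrite inE wE_val ?finset.sub0set // andbT.
by case: (E \subset pairs n); case: (P E).
Qed.

Hypothesis p0 : 0 <= p.
Hypothesis p1 : p <= 1.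

Lemma wE_ge0 (F E : S) : 0 <= wE F E.
Proof.
apply: prodr_ge0 => e _; rewrite /hF.
by do 2?case: ifP => _; case: (e \in E); rewrite ?subr_ge0.
Qed.

Lemma gnp_prob_compl (P : S -> bool) : gnp_prob p P = 1 - gnp_prob p (fun E => ~~ P E).
Proof.
rewrite !gnp_probE; apply/eqP; rewrite eq_sym subr_eq addrC -big_split /=.
rewrite (eq_bigr (fun E => wE finset.set0 E)); last by move=> E _; case: (P E); rewrite /= ?addr0 ?add0r.
by rewrite sum_wE ?finset.sub0set // cards0 expr0.
Qed.

Lemma gnp_prob_le1 (P : S -> bool) : gnp_prob p P <= 1.
Proof.
rewrite gnp_prob_compl lerBlDr lerDl gnp_probE.
by apply: sumr_ge0 => E _; case: ifP => // _; apply: wE_ge0.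
Qed.

Lemma gnp_prob_ge0 (P : S -> bool) : 0 <= gnp_prob p P.
Proof.
rewrite gnp_probE.
by apply: sumr_ge0 => E _; case: ifP => // _; apply: wE_ge0.
Qed.

Lemma union_bound (I : finType) (Q : pred I) (Fs : I -> S) (P : S -> bool) :
  (forall i, Q i -> Fs i \subset pairs n) ->
  (forall E, P E -> exists2 i, Q i & Fs i \subset E) ->
  gnp_prob p P <= \sum_(i | Q i) p ^+ #|Fs i|.
Proof.
move=> FP hP; rewrite gnp_probE.
under [X in _ <= X]eq_bigr => i Qi do rewrite -(sum_wE (FP i Qi)).
rewrite exchange_big /=; apply: ler_sum => E _.
case: ifP => [/hP [i Qi FE]|_]; last by apply: sumr_ge0 => i _; apply: wE_ge0.
rewrite (bigD1 i) //= -[X in X <= _]addr0; apply: lerD.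
  rewrite [wE (Fs i) E]wE_val ?FE ?andbT; last exact: FP.
  by rewrite wE_val ?finset.sub0set // andbT.
by apply: sumr_ge0 => j _; apply: wE_ge0.
Qed.
End Prob.

Section Count.
Variable n : nat.
Implicit Types (v u : 'I_n) (A B : {set 'I_n}).

Lemma edgesF_pairs m v u A B : goodT m v u A B -> edgesF v u A B \subset pairs n.
Proof.
case/and5P => vu _ _ vA /and3P[uA vB uB].
apply/fintype.subsetP => e; rewrite /edgesF !inE => /orP[/eqP ->|/orP[]].
- by rewrite cards2 vu.
- case/imsetP => x xA ->; have vx : v != x by apply: contraNneq vA => ->.
  by rewrite cards2 vx.
- case/imsetP => x xB ->; have vx : u != x by apply: contraNneq uB => ->.
  by rewrite cards2 vx.
Qed.

Lemma card_edgesF m v u A B : goodT m v u A B -> #|edgesF v u A B| = (2 * m).+1%N.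
Proof.
case/and5P => vu /eqP cA /eqP cB vA /and3P[uA vB uB].
have cX : #|[set [set v; x] | x in A]| = m.
  rewrite card_in_imset // => x y xA yA exy.
  have : x \in [set v; y] by rewrite -exy set22.
  case/set2P => // xv; move: vA; rewrite -xv xA //.
have cY : #|[set [set u; x] | x in B]| = m.
  rewrite card_in_imset // => x y xA yA exy.
  have : x \in [set u; y] by rewrite -exy set22.
  case/set2P => // xv; move: uB; rewrite -xv xA //.
have dXY : [set [set v; x] | x in A] :&: [set [set u; x] | x in B] = finset.set0.
  apply/setP => e; rewrite !inE; apply/negP => /andP[/imsetP[x xA ->] /imsetP[y yB eq]].
  have : u \in [set v; x] by rewrite eq set21.
  case/set2P => ux; first by move: vu; rewrite ux eqxx.
  by move: uA; rewrite ux xA.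
rewrite /edgesF cardsU1 cardsU dXY cards0 subn0 cX cY.
suff -> : [set v; u] \notin [set [set v; x] | x in A] :|: [set [set u; x] | x in B].
  by rewrite mul2n -addnn.
rewrite finset.in_setU negb_or; apply/andP; split; apply/negP => /imsetP[x xA eq].
  have : u \in [set v; x] by rewrite -eq set22.
  case/set2P => ux; first by move: vu; rewrite ux eqxx.
  by move: uA; rewrite ux xA.
have : v \in [set u; x] by rewrite -eq set21.
case/set2P => vx; first by move: vu; rewrite vx eqxx.
by move: vB; rewrite vx xA.
Qed.

Variable R : realType.
Variable p : R.
Hypothesis p0 : 0 <= p.
Hypothesis p1 : p <= 1.

Lemma bad_prob m :
  gnp_prob p (fun E : {set {set 'I_n}} => (m.+2 <= grundy E)%N) <=
  (n * n * 'C(n, m) * 'C(n, m))%:R * p ^+ (2 * m).+1.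
Proof.
pose I := ('I_n * 'I_n * {set 'I_n} * {set 'I_n})%type.
pose Q (t : I) := goodT m t.1.1.1 t.1.1.2 t.1.2 t.2.
pose Fs (t : I) := edgesF t.1.1.1 t.1.1.2 t.1.2 t.2.
have FP : forall t, Q t -> Fs t \subset pairs n by move=> t; apply: edgesF_pairs.
have hP : forall E, (m.+2 <= grundy E)%N -> exists2 t, Q t & Fs t \subset E.
  by move=> E /grundy_struct [v [u [A [B [g sub]]]]]; exists (v, u, A, B).
apply: le_trans (union_bound p0 p1 FP hP) _.
rewrite (eq_bigr (fun=> p ^+ (2 * m).+1)); last by move=> t Qt; rewrite (card_edgesF Qt).
pose D := [set A : {set 'I_n} | #|A| == m].
pose S := finset.setX (finset.setX (finset.setX [set: 'I_n] [set: 'I_n]) D) D.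
have -> : (n * n * 'C(n, m) * 'C(n, m))%N = #|S|.
  by rewrite !cardsX !cardsT card_draws card_ord.
rewrite big_mkcond /= mulr_natl -sumr_const [X in _ <= X]big_mkcond /=.
apply: ler_sum => t _; case: ifP => Qt.
  suff -> : t \in S by [].
  case/and5P: Qt => _ cA cB _ _.
  by case: t cA cB => [[[v u] A] B] cA cB; rewrite !finset.in_setX !inE cA cB.
by case: ifP => _ //; apply: exprn_ge0.
Qed.
End Count.

Section An.
Variable R : realType.

Lemma ln_le_lin (e y : R) : 0 < e -> 4 / e ^+ 2 <= y -> ln y <= e * y.
Proof.
move=> e0 hy.
have y0 : 0 < y by apply: lt_le_trans hy; rewrite divr_gt0 ?exprn_gt0.
pose s := Num.sqrt y.
have s0 : 0 < s by rewrite sqrtr_gt0.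
have ys : y = s ^+ 2 by rewrite sqr_sqrtr // ltW.
have hs : 2 <= e * s.
  rewrite ys ler_pdivrMr ?exprn_gt0 // in hy.
  have es0 : 0 < e * s by rewrite mulr_gt0.
  rewrite !expr2 in hy; nra.
rewrite ys lnXn // mulr2n.
have := ln_sublinear s0.
rewrite expr2; nra.
Qed.

Lemma ln_fact (m : nat) : m%:R * ln (m%:R : R) - m%:R <= ln (m`!)%:R.
Proof.
elim: m => [|m IH]; first by rewrite mul0r subr0 fact0 ln1.
rewrite factS natrM lnM ?posrE ?ltr0n ?fact_gt0 //.
case: m IH => [|m] IH.
  by rewrite fact0 ln1 mul1r; lra.
set a := (m.+1)%:R : R.
have a0 : 0 < a by rewrite ltr0n.
have ai : 0 < a^-1 by rewrite invr_gt0.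
have h1 : ln (m.+2%:R : R) <= ln a + a^-1.
  have -> : (m.+2%:R : R) = a * (1 + a^-1) by rewrite mulrDr mulr1 mulfV ?gt_eqF // -natr1.
  rewrite lnM ?posrE //; last by rewrite addr_gt0.
  by rewrite lerD2l le_ln1Dx //; apply: lt_trans ai; rewrite oppr_lt0.
have h2 : a * ln (m.+2%:R : R) <= a * ln a + 1.
  by have := ler_wpM2l (ltW a0) h1; rewrite mulrDr mulfV ?gt_eqF.
have e2 : (m.+2%:R : R) = a + 1 by rewrite -natr1.
rewrite -/a in IH; rewrite e2 in h2 *.
rewrite mulrDl mul1r; clearbody a; lra.
Qed.

Lemma key_bound (c d : R) : 0 < c -> 0 < d -> exists Y : R, forall N : R, Y <= N ->
  [/\ 1 <= (2^-1 + d) * (ln N / ln (ln N)), c <= N, 0 < N &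
   forall m : nat, (2^-1 + d) * (ln N / ln (ln N)) - 2 <= m%:R ->
     N * c ^+ (2 * m).+1 <= d * (m`!%:R) ^+ 2].
Proof.
move=> c0 d0.
pose c' := c + 1.
pose K := ln c'.
have K0 : 0 < K by apply: ln_gt0; rewrite /c'; lra.
pose al := (1 + d) / 2.
have al0 : 0 < al by rewrite /al; apply: divr_gt0; lra.
pose et := d / (2 * (1 + d)).
have et0 : 0 < et by rewrite /et; apply: divr_gt0 => //; lra.
pose D := 1 + K - ln al.
pose M := 4 / d + 2 + expR (1 + K) / al.
have M4 : 0 <= 4 / d by apply: divr_ge0 => //; lra.
have Me : 0 <= expR (1 + K) / al by apply: divr_ge0; [exact: expR_ge0 | lra].
have M0 : 0 < M by rewrite /M; lra.
pose L1 := 4 / (et / 2) ^+ 2.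
pose L0 := 3 + 4 / (M^-1) ^+ 2 + expR (L1 + 2 * `|D| / et + 1) + 2 * (K + `|ln d|) / d.
have h1 : 0 <= 4 / (M^-1) ^+ 2 by apply: divr_ge0 => //; apply: exprn_ge0; rewrite invr_ge0 ltW.
have h2 : 0 < expR (L1 + 2 * `|D| / et + 1) by apply: expR_gt0.
have h3 : 0 <= 2 * (K + `|ln d|) / d.
  apply: divr_ge0; last by lra.
  by apply: mulr_ge0 => //; apply: addr_ge0; [lra | exact: normr_ge0].
have hL1 : 0 <= L1 by apply: divr_ge0 => //; apply: exprn_ge0; apply: divr_ge0; lra.
have hD : 0 <= 2 * `|D| / et by apply: divr_ge0; [apply: mulr_ge0 => //; exact: normr_ge0 | lra].
exists (expR L0 + c) => N hN.
have hE := expR_gt0 L0.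
have N0 : 0 < N by lra.
have hl : L0 <= ln N.
  rewrite -[L0]expRK ler_ln ?posrE //; lra.
set l := ln N in hl *.
have l1 : 1 < l by rewrite /L0 in hl; lra.
have la0 : 0 < ln l by apply: ln_gt0.
set la := ln l.
have hla : la <= M^-1 * l by apply: ln_le_lin; [rewrite invr_gt0 | rewrite /L0 in hl; lra].
have hLa : L1 + 2 * `|D| / et + 1 <= la.
  rewrite -[X in X <= _]expRK /la ler_ln ?posrE //; rewrite /L0 in hl; lra.
have hlnla : ln la <= et / 2 * la by apply: ln_le_lin; [lra | rewrite /L1 in hLa; lra].
have hDla : D <= et / 2 * la.
  have e1 : et / 2 * (2 * `|D| / et) = `|D| by field; lra.
  have := ler_wpM2l (ltW (divr_gt0 et0 (ltr0n R 2))) (_ : 2 * `|D| / et <= la).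
  rewrite e1 => h; have := ler_norm D; lra.
pose r := l / la.
have rla : r * la = l by rewrite /r divfK // gt_eqF.
have hMr : M <= r.
  rewrite /r ler_pdivlMr //; have := ler_wpM2l (ltW M0) hla.
  by rewrite mulrA mulfV ?gt_eqF // mul1r mulrC.
have hr : 0 < r by lra.
have hdr : 4 <= d * r.
  have s1 : 4 / d <= r by rewrite /M in hMr; lra.
  have := ler_wpM2l (ltW d0) s1.
  by rewrite mulrCA mulfV ?gt_eqF // mulr1.
have hxe : expR (1 + K) <= al * r.
  have s1 : expR (1 + K) / al <= r by rewrite /M in hMr; lra.
  have := ler_wpM2l (ltW al0) s1.
  by rewrite mulrCA mulfV ?gt_eqF // mulr1.
have hT : (2^-1 + d) * (l / la) = 2^-1 * r + d * r by rewrite mulrDl.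
split => //; first by rewrite hT; lra.
  by lra.
move=> m; rewrite hT => hm.
pose x := al * r.
have ex : x = 2^-1 * r + 2^-1 * (d * r) by rewrite /x /al; ring.
have hxm : x <= m%:R by rewrite ex; lra.
have x0 : 0 < x by have := expR_gt0 (1 + K); lra.
have m0 : 0 < (m%:R : R) by lra.
have hlx : 1 + K <= ln x by rewrite -[1 + K]expRK ler_ln ?posrE // expR_gt0.
have hlm : ln x <= ln m%:R by rewrite ler_ln ?posrE.
have hlnx : ln x = ln al + la - ln la.
  have e : x * la = al * l by rewrite /x -mulrA rla.
  have : ln (x * la) = ln (al * l) by rewrite e.
  rewrite lnM ?posrE // lnM ?posrE //; last by lra.
  rewrite -/la => h; lra.
have hA : x * (ln x - 1 - K) <= m%:R * (ln m%:R - 1 - K).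
  by apply: ler_pM; lra.
have hB : (1 - et) * la <= ln x - 1 - K.
  rewrite hlnx; rewrite /D in hDla; rewrite mulrBl mul1r; lra.
have hC : x * ((1 - et) * la) <= x * (ln x - 1 - K) by apply: ler_wpM2l; lra.
have eC : x * ((1 - et) * la) = al * (1 - et) * l.
  by rewrite -rla /x; ring.
have e2 : 2 * (al * (1 - et)) = 1 + d / 2.
  rewrite /al /et; field; lra.
have hl2 : K - ln d <= d * l / 2.
  have s1 : 2 * (K + `|ln d|) / d <= l by rewrite /L0 in hl; lra.
  have := ler_wpM2l (ltW (divr_gt0 d0 (ltr0n R 2))) s1.
  have -> : d / 2 * (2 * (K + `|ln d|) / d) = K + `|ln d| by field; lra.
  have := lerNnormlW (lexx `|ln d|).
  have -> : d / 2 * l = d * l / 2 by ring.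
  lra.
have hf := ln_fact m.
have hc : ln c <= K by rewrite ler_ln ?posrE //; rewrite /c'; lra.
have hcm : ln c * m%:R <= K * m%:R by apply: ler_wpM2r => //; lra.
have f0 : (0 : R) < m`!%:R by rewrite ltr0n fact_gt0.
rewrite -ler_ln ?posrE ?mulr_gt0 ?exprn_gt0 //.
rewrite lnM ?posrE ?exprn_gt0 // lnXn // lnM ?posrE ?exprn_gt0 // lnXn //.
rewrite -(mulr_natr (ln c)) -(mulr_natr (ln m`!%:R)) -natr1 natrM.
rewrite eC in hC.
have e3 : d * l / 2 = d / 2 * l by ring.
rewrite e3 in hl2.
have e4 : al * (1 - et) * l = (1 + d / 2) / 2 * l by rewrite -e2; field.
rewrite e4 in hC.
rewrite -/l.
clearbody x r la l L0 L1 M D et al K c'.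
clear hT hm ex hxm x0 m0 hlx hlm hlnx hB eC e2 e3 e4 rla hMr hr hdr hxe hla hLa hlnla hDla.
lra.
Qed.
End An.

Local Open Scope classical_set_scope.

Lemma ffact_le_exp n m : (n ^_ m <= n ^ m)%N.
Proof.
elim: m => [|m IH] //; rewrite ffactnSr expnSr; apply: leq_mul => //; exact: leq_subr.
Qed.

Section Fin.
Variable R : realType.

Lemma alg_bound (n m : nat) (c d : R) : (0 < n)%N -> 0 < c ->
  n%:R * c ^+ (2 * m).+1 <= d * (m`!%:R) ^+ 2 ->
  (n * n * 'C(n, m) * 'C(n, m))%:R * (c / n%:R) ^+ (2 * m).+1 <= d.
Proof.
move=> n0 c0 h.
set N : R := n%:R; set a : R := 'C(n, m)%:R; set f : R := m`!%:R.
have N0 : 0 < N by rewrite ltr0n.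
have f0 : 0 < f by rewrite ltr0n fact_gt0.
set q := N ^+ m.
have q0 : 0 < q by rewrite exprn_gt0.
have haf : a * f <= q.
  by rewrite /a /f /q -natrM -natrX ler_nat bin_ffact ffact_le_exp.
have a0 : 0 <= a by rewrite ler0n.
have e1 : (n * n * 'C(n, m) * 'C(n, m))%:R * (c / N) ^+ (2 * m).+1
          = N * c ^+ (2 * m).+1 * (a / q) ^+ 2.
  have eN : N ^+ (2 * m).+1 = N * q ^+ 2 by rewrite exprS /q -exprM mulnC.
  rewrite !natrM -/N -/a expr_div_n eN; field.
  by rewrite !gt_eqF.
rewrite e1.
have haq : a / q <= f^-1.
  by rewrite ler_pdivrMr // mulrC -[a](mulfK (lt0r_neq0 f0)); apply: ler_wpM2r => //; rewrite invr_ge0 ltW.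
have haq2 : (a / q) ^+ 2 <= f^-1 ^+ 2.
  apply: lerXn2r => //; rewrite nnegrE; [exact: divr_ge0 a0 (ltW q0) | by rewrite invr_ge0 ltW].
have Nc0 : 0 <= N * c ^+ (2 * m).+1 by rewrite mulr_ge0 ?exprn_ge0 ?ltW.
apply: le_trans (ler_wpM2l Nc0 haq2) _.
by rewrite exprVn ler_pdivrMr ?exprn_gt0.
Qed.

Definition Pd (c d : R) (n : nat) : R :=
  @gnp_prob R n (c / n%:R)
    (fun E => (@grundy n E)%:R <= (2^-1 + d) * (ln (n%:R : R) / ln (ln (n%:R : R)))).

Lemma gnp_mono n (p : R) (P Q : {set {set 'I_n}} -> bool) : 0 <= p -> p <= 1 ->
  (forall E, P E -> Q E) -> gnp_prob p P <= gnp_prob p Q.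
Proof.
move=> p0 p1 hPQ; rewrite !gnp_probE; apply: ler_sum => E _.
case: ifP => [/hPQ -> //|_]; case: ifP => // _; exact: wE_ge0.
Qed.

Lemma claim1 (c d : R) : 0 < c -> 0 < d -> \forall n \near \oo, 1 - d <= Pd c d n.
Proof.
move=> c0 d0; have [Y hY] := key_bound c0 d0.
apply: filterS (nbhs_infty_ger Y) => n hYn.
have [T1 cN N0 hm] := hY _ hYn.
move: T1 hm; set T := (2^-1 + d) * _ => T1 hm.
have n0 : (0 < n)%N by rewrite -(ltr0n R).
have p0 : 0 <= c / n%:R by rewrite divr_ge0 ?ltW.
have p1 : c / n%:R <= 1 by rewrite ler_pdivrMr // mul1r.
have T0 : 0 <= T by lra.
pose k := Num.truncn T.
have k0 : (0 < k)%N by rewrite truncn_gt0.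
pose m := k.-1.
have km : k = m.+1 by rewrite prednK.
rewrite /Pd -/T (@gnp_prob_compl R n (c / n%:R)) lerD2l lerN2.
apply: le_trans (gnp_mono (Q := fun E => (m.+2 <= grundy E)%N) p0 p1 _) _.
  move=> E; rewrite -ltNge -truncn_lt_nat // -/k km; exact.
apply: le_trans (@bad_prob n R _ p0 p1 m) _.
apply: alg_bound n0 c0 (hm m _).
have := truncnS_gt T; rewrite -/k km -natr1 => h; lra.
Qed.
End Fin.

Unset Implicit Arguments. Set Strict Implicit. Set Printing Implicit Defensive.

Theorem corollary2 (R : realType) (c : R) (hc : 0 < c) :
  exists eps : nat -> R,
    (eps n @[n --> \oo] --> (0 : R)) /\
    ((@gnp_prob R n (c / n%:R)
          (fun E => (@grundy n E)%:R <=
                    (2^-1 + eps n) * (ln (n%:R : R) / ln (ln (n%:R : R)))))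
       @[n --> \oo] --> (1 : R)).
Proof.
pose Pj n (j : 'I_n.+1) :=
  (j == 0 :> nat) || (1 - (j.+1%:R)^-1 <= Pd c ((j.+1%:R : R)^-1) n).
pose jm n := (\max_(j < n.+1 | Pj n j) j)%N.
pose eps n := ((jm n).+1%:R : R)^-1.
have eps_ge0 n : 0 <= eps n by rewrite invr_ge0 ler0n.
have pP n : c <= n%:R -> 0 <= c / n%:R /\ c / n%:R <= 1.
  move=> cn; have n0 : 0 < (n%:R : R) by apply: lt_le_trans cn.
  by split; [rewrite divr_ge0 ?ltW | rewrite ler_pdivrMr // mul1r].
have epsP n : c <= n%:R -> 1 - eps n <= Pd c (eps n) n.
  move=> /pP [p0 p1]; rewrite /eps.
  have [j Pjj ->] : exists2 j : 'I_n.+1, Pj n j & jm n = j.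
    exists [arg max_(i > ord0 | Pj n i) i]; first by case: arg_maxnP.
    by rewrite /jm (bigop.bigmax_eq_arg ord0).
  case/orP: Pjj => [/eqP -> | //].
  by rewrite invr1 subrr; apply: gnp_prob_ge0.
have eps_small e : 0 < e -> \forall n \near \oo, eps n <= e.
  move=> e0; pose j0 := Num.truncn e^-1.
  have hj0 : (j0.+1%:R : R)^-1 <= e.
    rewrite invf_ple ?posrE ?ltr0n //; apply: ltW; exact: truncnS_gt.
  have d0 : 0 < (j0.+1%:R : R)^-1 by rewrite invr_gt0 ltr0n.
  apply: filterS2 (claim1 hc d0) (nbhs_infty_ge j0) => n h1 h2.
  apply: le_trans hj0; rewrite /eps lef_pV2 ?posrE ?ltr0n // ler_nat ltnS.
  have jlt : (j0 < n.+1)%N by rewrite ltnS.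
  apply: (leq_bigmax_cond (Ordinal jlt)).
  by rewrite /Pj /= h1 orbT.
exists eps; split.
  apply/cvgrPdist_le => e e0; apply: filterS (eps_small e e0) => n h.
  by rewrite sub0r normrN ger0_norm.
apply/cvgrPdist_le => e e0.
apply: filterS2 (eps_small e e0) (nbhs_infty_ger c) => n h1 h2.
have [p0 p1] := pP n h2.
have hle1 := gnp_prob_le1 p0 p1 (fun E => (@grundy n E)%:R <=
                    (2^-1 + eps n) * (ln (n%:R : R) / ln (ln (n%:R : R)))).
have := epsP n h2; rewrite /Pd => h3.
rewrite ger0_norm ?subr_ge0 //.
by apply: le_trans h1; rewrite lerBlDr -lerBlDl.
Qed.
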